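(* Let $A$ be a commutative ring, $r\ge1$, $B=A[x_1,\dots,x_r]$, let $k\ge1$ and $\alpha\in\mathbb{N}^r\setminus\{0\}$ with $\gcd(\alpha)$ invertible in $A$, and let $n\ge k|\alpha|$. If $a\in A$ satisfies $a\,\gamma^k(x^\alpha)\times\gamma^{n-k}(1)\in\Gamma^n_A(B)_{<k\alpha}$, then $a=0$.
   Context: $\Gamma^n_A(B)$ is identified with $\mathrm{TS}^n_A(B)=(B^{\otimes_A n})^{\mathfrak S_n}$ (componentwise multiplication). For a monomial $f$ and $0\le k\le n$, $\gamma^k(f)\times\gamma^{n-k}(1)=\sum_{S\subseteq\{1..n\},|S|=k}\bigotimes_{j}f_j$ with $f_j=f$ for $j\in S$ and $f_j=1$ otherwise. $B^{\otimes n}$ is $\mathbb{N}^r$-graded by giving $x^{\beta_1}\otimes\dots\otimes x^{\beta_n}$ multidegree $\beta_1+\dots+\beta_n$. $\beta<\gamma$ means $\beta\le\gamma$ componentwise and $\beta\ne\gamma$; $\Gamma^n_A(B)_{<\gamma}$ is the $A$-subalgebra generated by homogeneous elements of multidegree $<\gamma$. $|\alpha|=\sum\alpha_i$. *)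

(* Defs.v *)
From HB Require Import structures.
From mathcomp Require Import all_boot all_order all_algebra all_fingroup.
From mathcomp Require Import mpoly.
Set Implicit Arguments. Unset Strict Implicit. Unset Printing Implicit Defensive.
Import Order.TTheory GRing.Theory.
Local Open Scope ring_scope.

(* B = A[x_1..x_r];  B^{(x)_A n} is identified with the polynomial ring
   A[x_{j,i} : j < n, i < r] = {mpoly A[n*r]}, where the tensor factor j
   carries the variables x_{j,1..r}.  The variable x_{j,i} is 'X_(var j i). *)
Definition var (n r : nat) (j : 'I_n) (i : 'I_r) : 'I_(n * r) := mxvec_index j i.

Definition unvar (n r : nat) (v : 'I_(n * r)) : 'I_n * 'I_r :=
  enum_val (cast_ord (esym (mxvec_cast n r)) v).

Definition blockperm (n r : nat) (s : 'S_n) (v : 'I_(n * r)) : 'I_(n * r) :=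
  var (s (unvar v).1) (unvar v).2.

(* TS^n_A(B) = (B^{(x) n})^{S_n}: invariance under all block permutations
   (the algebra automorphisms x_{j,i} |-> x_{s j, i}). *)
Definition symmetric_tensor (A : comNzRingType) (n r : nat) (f : {mpoly A[n * r]}) : Prop :=
  forall s : 'S_n, f \mPo [tuple 'X_(blockperm s v) | v < n * r] = f.

Definition mdegr (n r : nat) (m : 'X_{1..n * r}) (i : 'I_r) : nat :=
  (\sum_(j < n) m (var j i))%N.

Definition homog_of (A : comNzRingType) (n r : nat) (d : 'I_r -> nat)
    (f : {mpoly A[n * r]}) : Prop :=
  forall m, m \in msupp f -> forall i, mdegr m i = d i.

Definition ltmdeg (r : nat) (b g : 'I_r -> nat) : Prop :=
  (forall i, (b i <= g i)%N) /\ (exists i, b i != g i).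

Inductive in_subalg (A : comNzRingType) (N : nat) (P : {mpoly A[N]} -> Prop)
  : {mpoly A[N]} -> Prop :=
| subalg_gen f : P f -> in_subalg P f
| subalg_cst c : in_subalg P (c%:MP)
| subalg_add f g : in_subalg P f -> in_subalg P g -> in_subalg P (f + g)
| subalg_mul f g : in_subalg P f -> in_subalg P g -> in_subalg P (f * g).

(* Gamma^n_A(B)_{< g}: the A-subalgebra generated by the homogeneous elements
   of Gamma^n_A(B) = TS^n_A(B) of multidegree < g *)
Definition Gamma_lt (A : comNzRingType) (n r : nat) (g : 'I_r -> nat)
    (f : {mpoly A[n * r]}) : Prop :=
  in_subalg (fun h => symmetric_tensor h /\
                      exists d, ltmdeg d g /\ homog_of d h) f.

(* gamma^k(x^alpha) x gamma^{n-k}(1)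
   = sum_{S subset {1..n}, |S| = k} (x)_j f_j, f_j = x^alpha if j in S, 1 else *)
Definition gamma_prod (A : comNzRingType) (n r k : nat) (alpha : 'I_r -> nat)
    : {mpoly A[n * r]} :=
  \sum_(S : {set 'I_n} | #|S| == k)
     \prod_(j in S) \prod_(i < r) 'X_(var j i) ^+ alpha i.

(* Main.v *)
Require Import Defs.
From HB Require Import structures.
From mathcomp Require Import all_boot all_order all_algebra all_fingroup all_field.
From mathcomp Require Import mpoly zify.
Set Implicit Arguments. Unset Strict Implicit. Unset Printing Implicit Defensive.
Import GRing.Theory Num.Theory.
Local Open Scope ring_scope.

Definition esig (R : comNzRingType) (n : nat) (x : 'I_n -> R) (l : nat) : R :=
  \sum_(S : {set 'I_n} | #|S| == l) \prod_(j in S) x j.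

Lemma mmap_mesym (n : nat) (R S : comNzRingType) (f : {rmorphism R -> S}) (h : 'I_n -> S) l :
  mmap f h (mesym n R l) = esig h l.
Proof.
rewrite mesymE rmorph_sum; apply: eq_bigr => T _.
change (mmap f h 'X_[mesym1 T] = \prod_(j in T) h j).
rewrite mmapX /mmap1 [RHS]big_mkcond /=; apply: eq_bigr => i _.
by rewrite mnmE; case: (i \in T).
Qed.

Lemma esig_rmorph (n : nat) (R S : comNzRingType) (phi : {rmorphism R -> S}) (x : 'I_n -> R) l :
  phi (esig x l) = esig (phi \o x) l.
Proof.
by rewrite /esig rmorph_sum; apply: eq_bigr => T _; rewrite rmorph_prod.
Qed.

Lemma esig_shape (n : nat) (R : comNzRingType) (e : nat) (y : 'I_n -> R) l :
  esig (fun j => 'X^e * (y j)%:P) l = 'X^(e * l) * (esig y l)%:P.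
Proof.
rewrite /esig rmorph_sum mulr_sumr; apply: eq_bigr => T /eqP cT.
rewrite big_split /= prodr_const rmorph_prod -exprM cT //.
Qed.

Lemma esig0 (n : nat) (R : comNzRingType) (x : 'I_n -> R) : esig x 0 = 1.
Proof.
rewrite /esig (big_pred1 set0) ?big_set0 // => T /=.
by rewrite cards_eq0.
Qed.

Definition tsig (R : comNzRingType) (n : nat) (x : 'I_n -> R) (j0 : 'I_n) (l : nat) : R :=
  \sum_(S : {set 'I_n} | (#|S| == l) && (j0 \in S)) \prod_(j in S) x j.
Definition usig (R : comNzRingType) (n : nat) (x : 'I_n -> R) (j0 : 'I_n) (l : nat) : R :=
  \sum_(S : {set 'I_n} | (#|S| == l) && (j0 \notin S)) \prod_(j in S) x j.

Lemma esig_split (n : nat) (R : comNzRingType) (x : 'I_n -> R) j0 l :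
  esig x l = tsig x j0 l + usig x j0 l.
Proof. by rewrite /esig /tsig /usig (bigID (fun S : {set 'I_n} => j0 \in S)). Qed.

Lemma tsig0 (n : nat) (R : comNzRingType) (x : 'I_n -> R) j0 : tsig x j0 0 = 0.
Proof.
rewrite /tsig big_pred0 // => T; rewrite cards_eq0.
by case: eqP => // ->; rewrite in_set0.
Qed.

Lemma tsigS (n : nat) (R : comNzRingType) (x : 'I_n -> R) j0 l :
  tsig x j0 l.+1 = x j0 * usig x j0 l.
Proof.
rewrite /tsig /usig mulr_sumr.
rewrite (reindex_onto (fun S => j0 |: S) (fun S => S :\ j0)) /=; last first.
  by move=> T /andP[_ jT]; rewrite setD1K.
apply: eq_big => [T|T /andP[_ jT]].
  rewrite setU11 andbT cardsU1.
  case jT: (j0 \in T) => /=.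
    rewrite andbF; apply/negbTE; apply/nandP; right; apply/eqP => E.
    by move: jT; rewrite -E !inE eqxx.
  by rewrite setU1K ?jT // eqxx andbT add1n eqSS.
have nj : j0 \notin T by rewrite -(eqP jT) !inE eqxx.
by rewrite big_setU1.
Qed.
Lemma vieta (n : nat) (R : comNzRingType) (x : 'I_n -> R) l : (l <= n)%N ->
  (\prod_(j < n) ('X + (x j)%:P))`_(n - l) = esig x l.
Proof.
move=> ln.
under eq_bigr => i _ do rewrite addrC.
rewrite bigA_distr /= coef_sum.
transitivity (\sum_(I in {set 'I_n}) if #|I| == l then \prod_(i in I) x i else 0).
  apply eq_bigr => I _.
  rewrite big_if/= big_const iter_mulr_1 -rmorph_prod/= coefCM coefXn.
  rewrite -[#|I| == _](eqn_add2r (n - l)) subnKC //.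
  rewrite -[X in (_ + _)%N == X]card_ord -(cardC I) eqn_add2l.
  by case: ifP; rewrite ?mulr1 ?mulr0.
by rewrite -big_mkcond.
Qed.
Lemma Phi_dvd_int (M : nat) (z : algC) (p : {poly int}) :
  M.-primitive_root z -> (map_poly intr p).[z] = 0 -> exists q, p = q * 'Phi_M.
Proof.
move=> pz pz0.
have mon := Cyclotomic_monic M.
have nz : 'Phi_M != 0 by apply: monic_neq0.
have Ep := Pdiv.IdomainMonic.divp_eq mon p.
set r := p %% 'Phi_M in Ep.
suff r0 : r = 0 by exists (p %/ 'Phi_M); rewrite {1}Ep r0 addr0.
have szr : (size r < size 'Phi_M)%N by apply: ltn_modpN0.
have rz : (map_poly (intr : int -> algC) r).[z] = 0.
  move: pz0; rewrite {1}Ep rmorphD rmorphM /= hornerD hornerM.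
  rewrite (Cintr_Cyclotomic pz).
  have := root_cyclotomic pz z; rewrite pz => /rootP ->.
  by rewrite mulr0 add0r.
have [pm [Dm mon_pm] dv] := minCpolyP z.
have Erq : map_poly (ratr : rat -> algC) (map_poly (intr : int -> rat) r)
           = map_poly (intr : int -> algC) r.
  by rewrite -map_poly_comp; apply: eq_map_poly => x /=; rewrite rmorph_int.
have : (pm %| map_poly (intr : int -> rat) r)%R.
  by rewrite -dv Erq; apply/rootP.
have szm : size pm = size 'Phi_M.
  rewrite -(size_map_poly (ratr : {rmorphism rat -> algC})) -Dm.
  rewrite (minCpoly_cyclotomic pz) -(Cintr_Cyclotomic pz).
  by rewrite size_map_inj_poly //; apply: intr_inj.
have szr' : size (map_poly (intr : int -> rat) r) = size r.
  by rewrite size_map_inj_poly //; apply: intr_inj.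
case: (eqVneq (map_poly (intr : int -> rat) r) 0) => [r0 _|rn0 d].
  by apply/eqP; rewrite -size_poly_eq0 -szr' r0 size_poly0.
by have := dvdp_leq rn0 d; rewrite szm szr' leqNgt szr.
Qed.

Lemma esigN (n : nat) (R : comNzRingType) (x : 'I_n -> R) l :
  esig (fun j => - x j) l = (-1) ^+ l * esig x l.
Proof.
rewrite /esig mulr_sumr; apply: eq_bigr => T /eqP cT.
by rewrite prodrN cT.
Qed.

Lemma esig_roots (n M : nat) (z : algC) l : M.-primitive_root z -> (M <= n)%N ->
  (0 < l)%N -> (l < M)%N ->
  esig (fun j : 'I_n => if (j < M)%N then z ^+ j else 0) l = 0.
Proof.
move=> pz Mn l0 lM.
set x := (fun j : 'I_n => _).
have : (\prod_(j < n) ('X + (- x j)%:P))`_(n - l) = 0.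
  pose F (j : nat) : {poly algC} := 'X + (- (if (j < M)%N then z ^+ j else 0))%:P.
  rewrite (eq_bigr (fun j : 'I_n => F j)) //.
  rewrite -(big_mkord xpredT F) (@big_cat_nat _ _ _ M) //=.
  rewrite (@eq_big_nat _ _ _ 0 M _ (fun j => 'X - (z ^+ j)%:P)); last first.
    by move=> i /andP[_ iM]; rewrite /F iM raddfN.
  rewrite (factor_Xn_sub_1 pz).
  rewrite (@eq_big_nat _ _ _ M n _ (fun j => 'X)); last first.
    by move=> i /andP[Mi _]; rewrite /F ltnNge Mi /= oppr0 addr0.
  rewrite prodr_const_nat mulrBl mul1r -exprD subnKC // coefB !coefXn.
  have -> : (n - l == n)%N = false.
    by apply/eqP; lia.
  have -> : (n - l == n - M)%N = false.
    by apply/eqP; lia.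
  by rewrite subrr.
rewrite vieta ?(leq_trans (ltnW lM) Mn) // esigN => /eqP.
by rewrite mulf_eq0 signr_eq0 => /eqP.
Qed.

Lemma eq_esig (n : nat) (R : comNzRingType) (x y : 'I_n -> R) l :
  x =1 y -> esig x l = esig y l.
Proof. by move=> e; apply: eq_bigr => T _; apply: eq_bigr => j _; rewrite e. Qed.

Definition dvdP (A : comNzRingType) (Phi p : {poly A}) := exists q, p = q * Phi.

Definition cpt (A : comNzRingType) (n M : nat) (j : 'I_n) : {poly A} :=
  if (j < M)%N then 'X^j else 0.

Lemma esig_cpt_dvd (A : comNzRingType) (n M l : nat) : (M <= n)%N -> (0 < l)%N -> (l < M)%N ->
  dvdP (map_poly (intr : int -> A) 'Phi_M) (esig (@cpt A n M) l).
Proof.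
move=> Mn l0 lM.
have M0 : (0 < M)%N by lia.
have [z pz] := C_prim_root_exists M0.
have [q Eq] : exists q, esig (@cpt int n M) l = q * 'Phi_M.
  apply: (Phi_dvd_int pz).
  have := esig_rmorph (horner_eval z \o map_poly (intr : int -> algC)) (@cpt int n M) l.
  rewrite /= /horner_eval => ->; rewrite -[RHS](esig_roots (n:=n) pz Mn l0 lM); apply: eq_esig.
  move=> j /=; rewrite /cpt; case: ifP => _.
    by rewrite map_polyXn /horner_eval hornerXn.
  by rewrite raddf0 /horner_eval horner0.
exists (map_poly intr q); rewrite -rmorphM /= -Eq esig_rmorph; apply: eq_esig.
move=> j /=; rewrite /cpt; case: ifP => _.
  by rewrite map_polyXn.
by rewrite raddf0.
Qed.
Lemma eq_mmap (N : nat) (R S : nzRingType) (f1 f2 : R -> S) (h1 h2 : 'I_N -> S) (p : {mpoly R[N]}) :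
  f1 =1 f2 -> h1 =1 h2 -> mmap f1 h1 p = mmap f2 h2 p.
Proof.
move=> ef eh; rewrite /mmap; apply: eq_bigr => m _; rewrite ef; congr (_ * _).
by rewrite /mmap1; apply: eq_bigr => i _; rewrite eh.
Qed.

Lemma mmapXU (N : nat) (R S : comNzRingType) (f : {rmorphism R -> S}) (h : 'I_N -> S) i :
  mmap f h 'X_i = h i.
Proof. by rewrite mmapX mmap1U. Qed.

Lemma mmap_rmorph (N : nat) (R S T : comNzRingType) (f : R -> S) (h : 'I_N -> S)
   (phi : {rmorphism S -> T}) (p : {mpoly R[N]}) :
  phi (mmap f h p) = mmap (phi \o f) (phi \o h) p.
Proof.
rewrite /mmap rmorph_sum; apply: eq_bigr => m _; rewrite rmorphM /=; congr (_ * _).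
by rewrite /mmap1 rmorph_prod; apply: eq_bigr => i _; rewrite rmorphXn.
Qed.

Lemma mmap_comp (N K : nat) (R S : comNzRingType) (f : {rmorphism R -> S}) (h : 'I_K -> S)
   (lq : N.-tuple {mpoly R[K]}) (p : {mpoly R[N]}) :
  mmap f h (p \mPo lq) = mmap f (fun i => mmap f h (tnth lq i)) p.
Proof.
have -> : p \mPo lq = \sum_(m <- msupp p) (p@_m)%:MP * mmap1 (tnth lq) m by [].
rewrite rmorph_sum /=; apply: eq_bigr => m _.
rewrite rmorphM /= mmapC; congr (_ * _).
by rewrite /mmap1 rmorph_prod; apply: eq_bigr => i _; rewrite rmorphXn.
Qed.

Lemma mmap1_shape (N : nat) (T : comNzRingType) (e : 'I_N -> nat) (y : 'I_N -> T)
  (h : 'I_N -> {poly T}) (m : 'X_{1..N}) :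
  (forall i, h i = 'X^(e i) * (y i)%:P) ->
  mmap1 h m = 'X^(\sum_i e i * m i)%N * (\prod_i y i ^+ m i)%:P.
Proof.
move=> eh; rewrite /mmap1 rmorph_prod -prodrXr -big_split /=.
apply: eq_bigr => i _; rewrite eh exprMn rmorphXn /= -exprM mulnC //.
Qed.

Section DvdP.
Variable A : comNzRingType.
Variable Phi : {poly A}.
Lemma dvdP0 : dvdP Phi 0. Proof. by exists 0; rewrite mul0r. Qed.
Lemma dvdPD p q : dvdP Phi p -> dvdP Phi q -> dvdP Phi (p + q).
Proof. by move=> [x ->] [y ->]; exists (x + y); rewrite mulrDl. Qed.
Lemma dvdPN p : dvdP Phi p -> dvdP Phi (- p).
Proof. by move=> [x ->]; exists (- x); rewrite mulNr. Qed.
Lemma dvdPMl p q : dvdP Phi p -> dvdP Phi (q * p).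
Proof. by move=> [x ->]; exists (q * x); rewrite mulrA. Qed.
Lemma dvdPMr p q : dvdP Phi p -> dvdP Phi (p * q).
Proof. by move=> dp; rewrite mulrC; apply: dvdPMl. Qed.
Lemma dvdP_sum (I : Type) (s : seq I) (P : pred I) (F : I -> {poly A}) :
  (forall i, P i -> dvdP Phi (F i)) -> dvdP Phi (\sum_(i <- s | P i) F i).
Proof.
move=> H; elim/big_rec: _ => [|i x Pi dx]; first exact: dvdP0.
by apply: dvdPD => //; apply: H.
Qed.
End DvdP.

Section W.
Variable A : comNzRingType.
Variables n M : nat.
Hypothesis M0 : (0 < M)%N.
Hypothesis Mn : (M <= n)%N.
Local Notation Phi := (map_poly (intr : int -> A) 'Phi_M).
Definition emb0 : {rmorphism A -> {poly {poly A}}} := (@polyC _) \o (@polyC _).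
Definition w0 (j : 'I_n) : {poly {poly A}} := 'X * (@cpt A n M j)%:P.

Lemma lemW (p : {mpoly A[n]}) (a : nat) : p \is symmetric -> (0 < a)%N -> (a < M)%N ->
  dvdP Phi ((mmap emb0 w0 p)`_a).
Proof.
move=> ps a0 aM.
have [t [tS _]] := sym_fundamental ps.
rewrite -tS mmap_comp.
set z := fun i => _.
have ez i : z i = 'X^(i.+1) * (esig (@cpt A n M) i.+1)%:P.
  rewrite /z tnth_mktuple mmap_mesym.
  have -> : ('X^(i.+1) = 'X^(1 * i.+1) :> {poly {poly A}}) by rewrite mul1n.
  by rewrite -esig_shape; apply: eq_esig => j; rewrite /w0 expr1.
rewrite /mmap coef_sum; apply: dvdP_sum => m _.
rewrite [emb0 _]/= coefCM; apply: dvdPMl.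
rewrite (mmap1_shape (e := fun i : 'I_n => i.+1) (y := fun i => esig (@cpt A n M) i.+1)) //.
rewrite coefXnM coefC.
case: ltnP => [_|wa]; first exact: dvdP0.
case: eqP => [Ea|_]; last exact: dvdP0.
have {}Ea : (\sum_(i < n) i.+1 * m i = a)%N by apply/eqP; rewrite eqn_leq wa -subn_eq0 Ea.
have [i mi] : exists i : 'I_n, (0 < m i)%N.
  apply/existsP; apply: contraTT a0 => /existsPn H.
  rewrite -Ea big1 // => i _; move: (H i); rewrite lt0n negbK => /eqP ->.
  by rewrite muln0.
have iM : (i.+1 < M)%N.
  apply: leq_ltn_trans aM; rewrite -Ea (bigD1 i) //= (leq_trans _ (leq_addr _ _)) //.
  by rewrite leq_pmulr.
rewrite (bigD1 i) //=; apply: dvdPMr.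
rewrite -(prednK mi) exprS; apply: dvdPMr.
by apply: esig_cpt_dvd.
Qed.
End W.

Lemma unvarK (n r : nat) (j : 'I_n) (i : 'I_r) : unvar (var j i) = (j, i).
Proof. by rewrite /unvar /var /mxvec_index cast_ordK enum_rankK. Qed.

Lemma varK (n r : nat) (v : 'I_(n * r)) : var (unvar v).1 (unvar v).2 = v.
Proof. by rewrite /unvar /var /mxvec_index -surjective_pairing enum_valK cast_ordKV. Qed.

Lemma sum_var (n r : nat) (F : 'I_(n * r) -> nat) :
  (\sum_(v < n * r) F v = \sum_(j < n) \sum_(i < r) F (var j i))%N.
Proof.
rewrite pair_big /=.
rewrite (reindex (fun p : 'I_n * 'I_r => var p.1 p.2)) //=.
exists (@unvar n r) => [p _|v _]; last exact: varK.
by rewrite unvarK -surjective_pairing.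
Qed.

Definition kappa (A : comNzRingType) (n r : nat) (f : {mpoly A[n * r]}) : {mpoly A[n]} :=
  f \mPo [tuple 'X_((unvar v).1) | v < n * r].

Lemma kappa_sym (A : comNzRingType) (n r : nat) (f : {mpoly A[n * r]}) :
  symmetric_tensor f -> kappa f \is symmetric.
Proof.
move=> fs; apply/issymP => s.
rewrite /msym /kappa mmap_comp.
rewrite -{2}(fs s) /comp_mpoly [in RHS]mmap_comp.
apply: eq_mmap => // v; rewrite !tnth_mktuple !mmapXU tnth_mktuple.
by rewrite /blockperm unvarK.
Qed.

Lemma coef1_XaddC (A : comNzRingType) (m : nat) : ((1 + 'X) ^+ m : {poly A})`_1 = m%:R.
Proof.
elim: m => [|m IH]; first by rewrite expr0 coef1.
rewrite exprSr mulrDr mulr1 coefD coefMX IH.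
have -> : ((1 + 'X) ^+ m : {poly A})`_0 = 1.
  by rewrite -horner_coef0 !hornerE ?addr0 ?expr1n.
by rewrite mulrS addrC.
Qed.

Lemma dvdP_const (A : comNzRingType) (Phi : {poly A}) (c : A) :
  Phi \is monic -> (1 < size Phi)%N -> dvdP Phi c%:P -> c = 0.
Proof.
move=> mon sz [q Eq].
case: (eqVneq q 0) => [q0|qn0].
  by apply/eqP; rewrite -polyC_eq0 Eq q0 mul0r.
have := size_polyC_leq1 c; rewrite Eq size_Mmonic //.
have : (0 < size q)%N by rewrite size_poly_gt0.
lia.
Qed.

Lemma mul_gcdn_eq0 (A : comNzRingType) (a : A) m n :
  a * m%:R = 0 -> a * n%:R = 0 -> a * (gcdn m n)%:R = 0.
Proof.
move=> am an.
have [u [v E]] := Bezoutz m n.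
have -> : (gcdn m n)%:R = ((u * m + v * n) : int)%:~R :> A by rewrite E.
have hm : (m : int)%:~R = m%:R :> A by [].
have hn : (n : int)%:~R = n%:R :> A by [].
by rewrite rmorphD !rmorphM /= mulrDr hm hn ![a * (_ * _)]mulrCA am an !mulr0 addr0.
Qed.

Section Main.
Variable A : comNzRingType.
Variables (n r k : nat) (alpha : 'I_r -> nat).
Variable M : nat.
Hypothesis EM : M = (k * \sum_i alpha i)%N.
Hypothesis M0 : (0 < M)%N.
Hypothesis Mn : (M <= n)%N.
Variable i0 : 'I_r.
Variable j0 : 'I_n.
Hypothesis j00 : val j0 = 0%N.

Local Notation Phi := (map_poly (intr : int -> A) 'Phi_M).
Local Notation cp := (@cpt A n M).

Definition emb : {rmorphism A -> {poly {poly {poly A}}}} :=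
  (@polyC _) \o (@polyC _) \o (@polyC _).
Definition mk (j : 'I_n) (i : 'I_r) : {poly {poly A}} :=
  (if (j == j0) && (i == i0) then 1 + 'X else 1) * (cp j)%:P.
Definition v1 (v : 'I_(n * r)) : {poly {poly {poly A}}} :=
  'X * (mk (unvar v).1 (unvar v).2)%:P.
Definition Lam (P : {mpoly A[n * r]}) : {poly A} := ((mmap emb v1 P)`_M)`_1.

Lemma mmap1_v1 (m : 'X_{1..n * r}) :
  mmap1 v1 m = 'X^(mdeg m) * (\prod_v (mk (unvar v).1 (unvar v).2) ^+ m v)%:P.
Proof.
rewrite (mmap1_shape (e := fun _ => 1%N) (y := fun v => mk (unvar v).1 (unvar v).2)).
  rewrite mdegE (eq_bigr (fun i => m i)) // => i _; exact: mul1n.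
by move=> v; rewrite /v1 expr1.
Qed.

Lemma coef_mmap_v1 (P : {mpoly A[n * r]}) a :
  (mmap emb v1 P)`_a = \sum_(m <- msupp P | mdeg m == a)
      (P@_m)%:P%:P * (\prod_v (mk (unvar v).1 (unvar v).2) ^+ m v).
Proof.
rewrite /mmap coef_sum [RHS]big_mkcond /=; apply: eq_bigr => m _.
rewrite coefCM mmap1_v1 coefXnM coefC.
case: ltnP => [lt|le]; first by rewrite ifN ?mulr0 // neq_ltn lt orbT.
case: eqP => [E|NE]; first by rewrite ifT // eqn_leq le -subn_eq0 E.
by rewrite ifN ?mulr0 //; apply/eqP => E; apply: NE; rewrite E subnn.
Qed.

Lemma Lam_coef0 (P : {mpoly A[n * r]}) : ((mmap emb v1 P)`_0)`_1 = 0.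
Proof.
rewrite coef_mmap_v1 coef_sum big1 // => m /eqP m0.
have -> : m = 0%MM by apply/eqP; rewrite -mdeg_eq0 m0.
rewrite big1 ?mulr1 ?coefC //= => v _.
by rewrite mnm0E expr0.
Qed.


Lemma Lam_gen (h : {mpoly A[n * r]}) (d : 'I_r -> nat) :
  homog_of d h -> ltmdeg d (fun i => (k * alpha i)%N) -> (mmap emb v1 h)`_M = 0.
Proof.
move=> hd [dle [i1 di1]].
rewrite coef_mmap_v1 big_seq_cond big1 // => m /andP[mh /eqP E].
exfalso; move: E; apply/eqP; rewrite neq_ltn; apply/orP; left.
rewrite mdegE sum_var exchange_big /=.
have -> : (\sum_(i < r) \sum_(j < n) m (var j i) = \sum_(i < r) d i)%N.
  by apply: eq_bigr => i _; rewrite -(hd m mh i).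
rewrite EM big_distrr /= (bigD1 i1) //= [X in (_ < X)%N](bigD1 i1) //=.
rewrite -addSn leq_add //; last by apply: leq_sum => i _; apply: dle.
by rewrite ltn_neqAle di1 dle.
Qed.

Lemma lemV (f : {mpoly A[n * r]}) a : symmetric_tensor f -> (0 < a)%N -> (a < M)%N ->
  dvdP Phi (((mmap emb v1 f)`_a)`_0).
Proof.
move=> fs a0 aM.
have -> : ((mmap emb v1 f)`_a)`_0 =
   (map_poly (horner_eval (0 : {poly A})) (mmap emb v1 f))`_a.
  by rewrite coef_map /= /horner_eval horner_coef0.
rewrite mmap_rmorph.
rewrite (eq_mmap (f2 := emb0 A) (h2 := fun v => @w0 A n M (unvar v).1) f); last first.
  move=> v /=; rewrite /v1 rmorphM /= map_polyX map_polyC /= /horner_eval /mk.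
  by rewrite hornerM hornerC; case: ifP => _; rewrite ?hornerD ?hornerX ?hornerC ?addr0 mul1r.
  by move=> x /=; rewrite map_polyC /= /horner_eval hornerC.
have -> : mmap (emb0 A) (fun v => @w0 A n M (unvar v).1) f = mmap (emb0 A) (@w0 A n M) (kappa f).
  rewrite /kappa mmap_comp; apply: eq_mmap => // v.
  by rewrite tnth_mktuple mmapXU.
by apply: lemW => //; apply: kappa_sym.
Qed.

Lemma Lam_mul (f g : {mpoly A[n * r]}) : symmetric_tensor f -> symmetric_tensor g ->
  dvdP Phi (Lam f) -> dvdP Phi (Lam g) -> dvdP Phi (Lam (f * g)).
Proof.
move=> fs gs df dg.
rewrite /Lam rmorphM /= coefM coef_sum.
apply: dvdP_sum => [[a /=]]; rewrite ltnS => aM _.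
rewrite coefM big_ord_recr big_ord1 /= subn0.
case: (posnP a) => [a0|a0].
  rewrite a0 Lam_coef0 mul0r addr0 subn0; exact: dvdPMl.
case: (ltnP a M) => [lt|ge].
  apply: dvdPD.
    by apply: dvdPMr; apply: lemV.
  by apply: dvdPMl; apply: lemV => //; lia.
have aE : a = M by apply/eqP; rewrite eqn_leq aM ge.
rewrite aE subnn Lam_coef0 mulr0 add0r; exact: dvdPMr.
Qed.

Lemma Inv (P : {mpoly A[n * r]}) : Gamma_lt (fun i => (k * alpha i)%N) P ->
  symmetric_tensor P /\ dvdP Phi (Lam P).
Proof.
elim => {P} [h [hs [d [ld hd]]] | c | f g _ [fs df] _ [gs dg] | f g _ [fs df] _ [gs dg]].
- by split => //; rewrite /Lam (Lam_gen hd ld) coef0; apply: dvdP0.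
- split; first by move=> s; rewrite comp_mpolyC.
  rewrite /Lam mmapC /= !coefC ifN ?coef0; [exact: dvdP0 | by rewrite -lt0n].
- split; first by move=> s; rewrite comp_mpolyD fs gs.
  by rewrite /Lam rmorphD /= !coefD; apply: dvdPD.
- split; first by move=> s; rewrite rmorphM /= fs gs.
  exact: Lam_mul.
Qed.

Lemma Z_eq (j : 'I_n) :
  \prod_(i < r) mk j i ^+ alpha i =
  (if j == j0 then (1 + 'X) ^+ alpha i0 else 1) * ((cp j) ^+ (\sum_i alpha i))%:P.
Proof.
rewrite /mk (eq_bigr (fun i => (if (j == j0) && (i == i0) then 1 + 'X else 1) ^+ alpha i * ((cp j)%:P) ^+ alpha i)); last by move=> i _; rewrite exprMn.
rewrite big_split /= -prodrXr; congr (_ * _); last by rewrite rmorph_prod; apply: eq_bigr => i _; rewrite rmorphXn.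
case jj: (j == j0) => /=.
  rewrite (bigD1 i0) //= !eqxx /= big1 ?mulr1 // => i ni.
  by rewrite (negbTE ni) expr1n.
by rewrite big1 // => i _; rewrite expr1n.
Qed.

Lemma Lam_gp : Lam (gamma_prod A n k alpha) =
  (alpha i0)%:R * tsig (fun j => cp j ^+ (\sum_i alpha i)) j0 k.
Proof.
set q := (\sum_i alpha i)%N.
rewrite /Lam /gamma_prod rmorph_sum /= !coef_sum /tsig mulr_sumr [RHS]big_mkcondr /=.
apply: eq_bigr => S /eqP cS.
rewrite rmorph_prod /=.
have E1 j : mmap emb v1 (\prod_(i < r) 'X_(var j i) ^+ alpha i) =
    'X^q * (\prod_(i < r) mk j i ^+ alpha i)%:P.
  rewrite rmorph_prod /=.
  under eq_bigr do rewrite rmorphXn /= mmapXU /v1 unvarK /= exprMn.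
  by rewrite big_split /= prodrXr rmorph_prod; congr (_ * _); apply: eq_bigr => i _; rewrite rmorphXn.
under eq_bigr do rewrite E1.
rewrite big_split /= prodr_const -exprM -rmorph_prod /= coefXnM.
have -> : (q * #|S|)%N = M by rewrite EM cS mulnC.
rewrite ltnn subnn coefC /=.
under eq_bigr do rewrite Z_eq.
rewrite big_split /= -rmorph_prod coefMC.
case: (boolP (j0 \in S)) => jS.
  rewrite (bigD1 j0) //= eqxx big1 ?mulr1; last first.
    by move=> j /andP[_ nj]; rewrite (negbTE nj).
  by rewrite coef1_XaddC.
rewrite big1 ?coef1 ?mul0r //= => j jS'.
by case: eqP => // E; move: jS; rewrite -E jS'.
Qed.

Lemma q_gt0 : (0 < \sum_i alpha i)%N.
Proof. by move: M0; rewrite EM muln_gt0 => /andP[]. Qed.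

Lemma esig_pow_dvd l : (0 < l)%N -> (l < k)%N ->
  dvdP Phi (esig (fun j => cp j ^+ (\sum_i alpha i)) l).
Proof.
set q := (\sum_i alpha i)%N => l0 lk.
set p := mesym n A l \mPo [tuple 'X_j ^+ q | j < n].
have ps : p \is symmetric.
  apply/issymP => s; rewrite /msym /p mmap_comp.
  rewrite -{2}(issymP _ (mesym_sym n A l) s) msym_mPo /comp_mpoly.
  apply: eq_mmap => // j; rewrite !tnth_mktuple rmorphXn /= mmapXU.
  by [].
have qpos : (0 < q)%N by apply: q_gt0.
have := @lemW A n M Mn p (q * l) ps.
have -> : mmap (emb0 A) (@w0 A n M) p = 'X^(q * l) * (esig (fun j => cp j ^+ q) l)%:P.
  rewrite /p mmap_comp.
  rewrite (eq_mmap (f2 := emb0 A) (h2 := fun j => 'X^q * (cp j ^+ q)%:P)) //; last first.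
    by move=> j; rewrite tnth_mktuple rmorphXn /= mmapXU /w0 exprMn rmorphXn.
  by rewrite mmap_mesym esig_shape.
rewrite coefXnM ltnn subnn coefC /=; apply.
  by rewrite muln_gt0 qpos l0.
by rewrite EM -/q [(k * q)%N]mulnC ltn_pmul2l.
Qed.

Lemma tsig_dvd : (0 < k)%N ->
  dvdP Phi (tsig (fun j => cp j ^+ (\sum_i alpha i)) j0 k - (-1) ^+ k.-1).
Proof.
move=> k0.
set x := (fun j => _).
have x0 : x j0 = 1.
  by rewrite /x /cpt j00 M0 expr0 expr1n.
suff H : forall l, (l < k)%N -> dvdP Phi (tsig x j0 l.+1 - (-1) ^+ l).
  by rewrite -{1}(prednK k0); apply: H; rewrite prednK.
elim => [_|l IH lk].
  rewrite tsigS x0 mul1r /usig.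
  have := esig_split x j0 0; rewrite esig0 tsig0 add0r /usig => <-.
  by rewrite expr0 subrr; apply: dvdP0.
have E : tsig x j0 l.+2 = esig x l.+1 - tsig x j0 l.+1.
  by rewrite tsigS x0 mul1r (esig_split x j0 l.+1) addrAC subrr add0r.
rewrite E exprS mulN1r opprK.
have -> : esig x l.+1 - tsig x j0 l.+1 + (-1) ^+ l =
          esig x l.+1 + - (tsig x j0 l.+1 - (-1) ^+ l) by rewrite opprB addrA addrAC.
apply: dvdPD; first by apply: esig_pow_dvd.
by apply: dvdPN; apply: IH; apply: ltnW.
Qed.

Lemma final_i0 (a : A) : (0 < k)%N ->
  Gamma_lt (fun i => (k * alpha i)%N) (a *: gamma_prod A n k alpha) ->
  a * (alpha i0)%:R = 0.
Proof.
move=> k0 H.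
have [_ d] := Inv H.
have EL : Lam (a *: gamma_prod A n k alpha) = a%:P * Lam (gamma_prod A n k alpha).
  by rewrite /Lam mmapZ /= !coefCM.
move: d; rewrite EL Lam_gp.
set T := tsig _ _ _; set s := ((-1) ^+ k.-1 : A).
have dT : dvdP Phi (T - s%:P) by rewrite /s rmorphXn rmorphN rmorph1; apply: tsig_dvd.
move=> d.
have dc : dvdP Phi ((a * (alpha i0)%:R * s)%:P).
  have -> : (a * (alpha i0)%:R * s)%:P =
      a%:P * ((alpha i0)%:R * T) + - (a%:P * (alpha i0)%:R * (T - s%:P)).
    by rewrite !rmorphM /= polyC_natr mulrBr opprB mulrA addrC subrK.
  by apply: dvdPD => //; apply: dvdPN; apply: dvdPMl.
have mon : Phi \is monic by apply: monic_map; apply: Cyclotomic_monic.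
have sz : (1 < size Phi)%N.
  rewrite size_map_poly_id0; last by rewrite (monicP (Cyclotomic_monic M)) rmorph1 oner_neq0.
  by rewrite size_Cyclotomic ltnS totient_gt0.
have := dvdP_const mon sz dc => /(congr1 (fun y => y * s)).
by rewrite mul0r -mulrA /s -exprMn mulrNN mulr1 expr1n mulr1.
Qed.

End Main.

Theorem proposition7p13 (A : comNzRingType) (r : nat) (k : nat) (n : nat)
    (alpha : 'I_r -> nat) (a : A) :
  (1 <= r)%N -> (1 <= k)%N ->
  (exists i, alpha i != 0%N) ->
  (exists b : A, b * ((\big[gcdn/0%N]_(i < r) alpha i)%:R) = 1) ->
  (k * (\sum_(i < r) alpha i) <= n)%N ->
  Gamma_lt (fun i => (k * alpha i)%N) (a *: gamma_prod A n k alpha) ->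
  a = 0.
Proof.
move=> r1 k1 [i1 ai1] [b Eb] Mn H.
set M := (k * \sum_(i < r) alpha i)%N in Mn.
have M0 : (0 < M)%N.
  rewrite /M muln_gt0 k1 /= (bigD1 i1) //= addn_gt0; apply/orP; left.
  by rewrite lt0n.
have n0 : (0 < n)%N by apply: leq_trans Mn.
have ai : forall i0, a * (alpha i0)%:R = 0.
  move=> i0.
  exact: (@final_i0 A n r k alpha M erefl M0 Mn i0 (Ordinal n0) erefl a k1 H).
have ag : a * (\big[gcdn/0%N]_(i < r) alpha i)%:R = 0.
  elim/big_ind: _ => [|x y hx hy|i _]; first by rewrite mulr0.
    exact: mul_gcdn_eq0.
  exact: ai.
by rewrite -[a]mulr1 -Eb mulrCA ag mulr0.
Qed.
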